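(* Let $\mathcal{P}$ be a probability distribution over $\Omega=\mathcal{X}\times\mathcal{Y}\times[K]$, and let $\hat z:\mathcal{X}\to J$ be a proxy with finite range $J$, where every $j\in J$ has $\hat r_j:=\Pr_{(x,y,z)\sim\mathcal{P}}[\hat z(x)=j]>0$. For $j\in J$ let $a_j\in\mathbb{R}^K$ be the row vector with entries $a_{j,i}=\Pr_{(x,y,z)\sim\mathcal{P}}[z=i\mid \hat z(x)=j]$, and let $A$ be the $|J|\times K$ matrix with rows $a_j$. Let $U=(1/K,\dots,1/K)$. Let $q$ be any minimizer of $\lVert qA-U\rVert_2$ over stochastic row vectors $q\in\mathbb{R}^{|J|}$ (i.e. $q_j\ge 0$, $\sum_j q_j=1$), set $\rho_j=q_j/\hat r_j$, and normalize $\rho_j\leftarrow\rho_j/\max_{j'}\rho_{j'}$. Consider the sampling procedure: draw $(x,y,z)\sim\mathcal{P}$ (with $z$ unobserved), compute $\hat z(x)$, and accept the sample with probability $\rho_{\hat z(x)}$. If $U\in C(A)$, then the distribution of the protected attribute $z$ among accepted samples is uniform, i.e. $\Pr[z=i\mid \text{accepted}]=1/K$ for all $i\in[K]$.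
   Context: $C(A)$ denotes the convex hull of the rows of $A$, i.e. $\{\sum_j q_j a_j: q_j\ge 0,\ \sum_j q_j=1\}$. Here $x$ is the feature vector (excluding the sensitive attribute), $y\in\{0,1\}$ the label, and $z\in[K]$ the sensitive group. *)

(* Defs.v *)
From HB Require Import structures.
From mathcomp Require Import all_boot all_order all_algebra.
From mathcomp Require Import all_classical all_reals all_analysis.
Set Implicit Arguments. Unset Strict Implicit. Unset Printing Implicit Defensive.
Import Order.TTheory GRing.Theory Num.Theory.
Local Open Scope classical_set_scope.
Local Open Scope ring_scope.

Section ProxyRejection.
Context {d : measure_display} {Om : measurableType d} {R : realType}.
Variable P : probability Om R.
Variables (X Y : Type) (K : nat) (J : finType).
Variables (xv : Om -> X) (yv : Om -> Y) (zv : Om -> 'I_K) (zhat : X -> J).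

Definition prob (E : set Om) : R := fine (P E).

Definition rhat (j : J) : R := prob [set w | zhat (xv w) = j].

Definition pjoint (j : J) (i : 'I_K) : R :=
  prob [set w | zhat (xv w) = j /\ zv w = i].

Definition amat (j : J) (i : 'I_K) : R := pjoint j i / rhat j.

Definition stochastic (q : J -> R) : Prop :=
  (forall j, 0 <= q j) /\ \sum_j q j = 1.

Definition qA (q : J -> R) (i : 'I_K) : R := \sum_j q j * amat j i.

Definition Uvec (i : 'I_K) : R := (K%:R)^-1.

Definition dist2 (q : J -> R) : R := Num.sqrt (\sum_i (qA q i - Uvec i) ^+ 2).

(* U \in C(A), the convex hull of the rows of A *)
Definition U_in_hull : Prop :=
  exists q : J -> R, stochastic q /\ forall i, qA q i = Uvec i.

Definition is_minimizer (q : J -> R) : Prop :=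
  stochastic q /\ forall q' : J -> R, stochastic q' -> dist2 q <= dist2 q'.

Definition rho (q : J -> R) (j : J) : R := q j / rhat j.
Definition rho_max (q : J -> R) : R := \big[Num.max/0]_j rho q j.
Definition rho_n (q : J -> R) (j : J) : R := rho q j / rho_max q.

(* Pr[z = i and accepted] for the procedure: draw w ~ P, accept with
   probability rho_n (zhat (x w)); equals E[1{z=i} * rho_n(zhat x)]. *)
Definition accept_joint (q : J -> R) (i : 'I_K) : R :=
  \sum_j rho_n q j * pjoint j i.
Definition accept_prob (q : J -> R) : R := \sum_i accept_joint q i.
Definition accept_cond (q : J -> R) (i : 'I_K) : R :=
  accept_joint q i / accept_prob q.

End ProxyRejection.

(* Main.v *)
Require Import Defs.
From HB Require Import structures.
From mathcomp Require Import all_boot all_order all_algebra.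
From mathcomp Require Import all_classical all_reals all_analysis.
Import Order.TTheory GRing.Theory Num.Theory.
Local Open Scope classical_set_scope.
Local Open Scope ring_scope.

Lemma bigmax_ge (R : realType) (I : eqType) (s : seq I) (F : I -> R) j :
  j \in s -> F j <= \big[Num.max/0]_(i <- s) F i.
Proof.
elim: s => [|a s IH] //=; rewrite in_cons big_cons => /orP [/eqP -> | Hj].
  by rewrite le_max lexx.
by rewrite le_max (IH Hj) orbT.
Qed.

Theorem lemma2 (d : measure_display) (Om : measurableType d) (R : realType)
  (P : probability Om R) (X Y : Type) (K : nat) (J : finType)
  (xv : Om -> X) (yv : Om -> Y) (zv : Om -> 'I_K) (zhat : X -> J)
  (Hmeas : forall (j : J) (i : 'I_K),
      measurable [set w | zhat (xv w) = j /\ zv w = i])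
  (Hrpos : forall j : J, 0 < rhat P xv zhat j)
  (q : J -> R)
  (Hq : is_minimizer P xv zv zhat q)
  (HU : U_in_hull P xv zv zhat) :
  forall i : 'I_K, accept_cond P xv zv zhat q i = (K%:R)^-1.
Proof.
move=> i0.
have Kpos : (0 < K)%N by case: (K) i0 => [[]|].
case: Hq => [[Hq0 Hq1] Hmin].
case: HU => q0 [Hs0 HqU].
have Hd0 : dist2 P xv zv zhat q0 = 0.
  rewrite /dist2 big1 ?sqrtr0 // => i _; by rewrite HqU subrr expr2 mulr0.
have Hd : dist2 P xv zv zhat q = 0.
  apply/eqP; rewrite eq_le sqrtr_ge0 andbT -Hd0; exact: Hmin.
have HqA : forall i, qA P xv zv zhat q i = Uvec i.
  move: Hd; rewrite /dist2 => /eqP; rewrite sqrtr_eq0 => Hle.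
  have Hs : \sum_i (qA P xv zv zhat q i - Uvec i) ^+ 2 = 0.
    by apply/eqP; rewrite eq_le Hle; apply: sumr_ge0 => i _; apply: sqr_ge0.
  move=> i; apply/eqP; rewrite -subr_eq0 -sqrf_eq0; apply/eqP.
  by apply: (psumr_eq0P _ Hs) => // k _; apply: sqr_ge0.
set M := rho_max P xv zhat q.
have Mpos : 0 < M.
  have [j Hj] : exists j, 0 < q j.
    apply/existsP; apply: contraT; rewrite negb_exists => /forallP H.
    have : \sum_j q j = 0.
      by rewrite big1 // => j _; apply/eqP; rewrite eq_le Hq0 andbT leNgt H.
    by rewrite Hq1 => /eqP; rewrite oner_eq0.
  apply: (lt_le_trans (y := rho P xv zhat q j)).
    by rewrite /rho divr_gt0.
  by apply: bigmax_ge; rewrite mem_index_enum.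
have HJ : forall i, accept_joint P xv zv zhat q i = M^-1 * (K%:R)^-1.
  move=> i; have := HqA i; rewrite /Uvec => <-; rewrite /qA /accept_joint mulr_sumr.
  apply: eq_bigr => j _; rewrite /rho_n /rho /amat -/M.
  by rewrite !mulrA [in RHS]mulrC !mulrA; congr (_ * _); rewrite mulrC -!mulrA [X in _ * X]mulrC.
rewrite /accept_cond /accept_prob HJ.
rewrite (eq_bigr (fun=> M^-1 * (K%:R)^-1)) // sumr_const card_ord.
have Kn : (K%:R : R) != 0 by rewrite pnatr_eq0 -lt0n.
have Mn : M^-1 != 0 by rewrite invr_eq0 gt_eqF.
rewrite -(mulr_natr (M^-1 / K%:R)) (divfK Kn).
by rewrite mulrAC (divff Mn) mul1r.
Qed.
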